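(* Let $X$ be any topological space and let $Y$ be a topological space such that $\hat{c}(Y^\omega) > \pi w(Y) \geq \pi w(X)$. Then for every cardinal $\mu$ with $\omega \leq \mu \leq \pi w(X)$, the product space $X \times Y^\mu$ (with the Tychonoff product topology) has a $\sigma$-disjoint $\pi$-base.
   Context: All spaces are Hausdorff. A $\pi$-base for a space $Z$ is a family $\mathcal{P}$ of non-empty open subsets of $Z$ such that every non-empty open $U \subseteq Z$ contains some $P \in \mathcal{P}$; $\pi w(Z)$ is the minimum cardinality of a $\pi$-base of $Z$. A $\pi$-base is $\sigma$-disjoint if it is a countable union of families each consisting of pairwise disjoint sets. A cellular family in $Z$ is a family of pairwise disjoint non-empty open subsets of $Z$. $\hat{c}(Z)$ denotes the least cardinal $\kappa$ such that $Z$ has no cellular family of cardinality $\kappa$. *)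

(* Defs.v *)
From HB Require Import structures.
From mathcomp Require Import all_boot all_order all_algebra.
From mathcomp Require Import all_classical all_reals all_analysis.
Set Implicit Arguments. Unset Strict Implicit. Unset Printing Implicit Defensive.
Local Open Scope classical_set_scope.
Local Open Scope card_scope.

(* Cardinals are represented by sets (of some type); comparisons use the
   library's [#<=] (injection exists) and [#=] (bijection exists). *)

Definition pi_base (Z : topologicalType) (P : set (set Z)) : Prop :=
  (forall A, P A -> open A /\ A !=set0) /\
  (forall U, open U -> U !=set0 -> exists2 A, P A & A `<=` U).

Definition pairwise_disjoint (Z : Type) (F : set (set Z)) : Prop :=
  forall A B, F A -> F B -> A <> B -> A `&` B = set0.

Definition cellular (Z : topologicalType) (C : set (set Z)) : Prop :=
  (forall A, C A -> open A /\ A !=set0) /\ pairwise_disjoint C.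

Definition sigma_disjoint_pi_base (Z : topologicalType) (P : set (set Z)) : Prop :=
  pi_base P /\
  exists F : nat -> set (set Z),
    P = \bigcup_n F n /\ forall n, pairwise_disjoint (F n).

Definition min_pi_base (Z : topologicalType) (P : set (set Z)) : Prop :=
  pi_base P /\ forall P' : set (set Z), pi_base P' -> P #<= P'.

Definition piw_le (X Y : topologicalType) : Prop :=
  forall PY : set (set Y), pi_base PY ->
    exists PX : set (set X), pi_base PX /\ PX #<= PY.

Definition card_le_piw (U : Type) (K : set U) (Z : topologicalType) : Prop :=
  forall P : set (set Z), pi_base P -> K #<= P.

(* "chat(Z) > #K": since chat(Z) is the least cardinal kappa such that Z has
   no cellular family of cardinality kappa, chat(Z) > #K iff every cardinal
   <= #K (i.e. the cardinality of some subset of K) is the cardinality of a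
   cellular family of Z. *)
Definition chat_gt (Z : topologicalType) (U : Type) (K : set U) : Prop :=
  forall L, L `<=` K -> exists C : set (set Z), cellular C /\ C #= L.

(* Main.v *)
Set Warnings "-all".
Require Import Defs.
From HB Require Import structures.
From mathcomp Require Import all_boot all_order all_algebra.
From mathcomp Require Import all_classical all_reals all_analysis.
Local Open Scope classical_set_scope.
Local Open Scope card_scope.
From Stdlib Require Cantor.
Section Box.
Variables (I : Type) (Y : topologicalType).

Fixpoint inbox (s : seq (I * set Y)) (z : I -> Y) : Prop :=
  if s is p :: s' then p.2 (z p.1) /\ inbox s' z else True.
Fixpoint okbox (s : seq (I * set Y)) (z : I -> Y) : Prop :=
  if s is p :: s' then (open p.2 /\ p.2 (z p.1)) /\ okbox s' z else True.

Lemma inbox_cat s1 s2 z : inbox (s1 ++ s2) z <-> inbox s1 z /\ inbox s2 z.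
Proof. by elim: s1 => [|p s1 IH] /=; [tauto|rewrite IH; tauto]. Qed.
Lemma okbox_cat s1 s2 z : okbox (s1 ++ s2) z <-> okbox s1 z /\ okbox s2 z.
Proof. by elim: s1 => [|p s1 IH] /=; [tauto|rewrite IH; tauto]. Qed.

Lemma ptws_box (y : {ptws I -> Y}) (A : set {ptws I -> Y}) :
  nbhs y A -> exists s, okbox s y /\ (forall z, inbox s z -> A z).
Proof.
pose G := [set A : set {ptws I -> Y} | exists s, okbox s y /\ (forall z, inbox s z -> A z)].
have FG : Filter G.
  constructor.
  - by exists [::].
  - move=> P Q [t1 [h1 i1]] [t2 [h2 i2]]; exists (t1 ++ t2); split.
      by apply/okbox_cat.
    by move=> z /inbox_cat [/i1 ? /i2 ?].
  - by move=> P Q PQ [s [h i]]; exists s; split => // z /i /PQ.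
move: A; apply: (@cvg_sup _ I (fun i => Topological.class (initial_topology (fun f : (I -> Y) => f i))) G y FG).2.
move=> i B; rewrite nbhsE => -[C [[Oi hO <-] CY] CB].
exists [:: (i, Oi)]; split => //= z [Hz _]; exact: CB.
Qed.

Lemma box_ptws (y : {ptws I -> Y}) s : okbox s y -> nbhs y (inbox s : set {ptws I -> Y}).
Proof.
elim: s => [|p s IH] /=; first by move=> _; exact: (@filterT _ (nbhs y) (nbhs_filter y)).
move=> [[hO hy] /IH h].
apply: (@filterS _ _ (nbhs_filter y) ([set z | p.2 (z p.1)] `&` inbox s)); first by move=> z [].
apply: (@filterI _ _ (nbhs_filter y)) h.
have := (@cvg_sup _ I (fun i => Topological.class (initial_topology (fun f : (I -> Y) => f i))) (nbhs y) y _).1 (@cvg_id _ (nbhs y)) p.1.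
apply; first by apply: (@nbhs_filter {ptws I -> Y}).
apply: (@open_nbhs_nbhs (initial_topology (fun f : I -> Y => f p.1))); split => //.
by exists p.2.
Qed.
Lemma okbox_nth d s z : okbox s z -> forall l, (l < size s)%N ->
  open (nth d s l).2 /\ (nth d s l).2 (z (nth d s l).1).
Proof. elim: s => [|p s IH] //= [hp /IH {}IH] [|l] //=; rewrite ltnS; exact: IH. Qed.
Lemma nth_inbox d s z : (forall l, (l < size s)%N -> (nth d s l).2 (z (nth d s l).1)) -> inbox s z.
Proof.
elim: s => [|p s IH] //= H; split; first exact: (H 0%N).
by apply: IH => l hl; apply: (H l.+1).
Qed.
End Box.
Arguments inbox {I Y}. Arguments okbox {I Y}. Arguments okbox_nth {I Y d s z}. Arguments nth_inbox {I Y d s z}.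
Arguments ptws_box {I Y y A}. Arguments box_ptws {I Y y s}.

Lemma open_restr (I J : Type) (Y : topologicalType) (phi : J -> I)
  (V : set {ptws J -> Y}) : open V ->
  open ([set z | V (fun k => z (phi k))] : set {ptws I -> Y}).
Proof.
rewrite !openE => oV z Vz.
have := oV _ Vz; rewrite /interior => /ptws_box [s [os iV]].
have e w : inbox (map (fun p => (phi p.1, p.2)) s) w <-> inbox s (fun k => w (phi k)).
  by elim: s {os iV} => [|p s IH] //=; rewrite IH.
have os' : okbox (map (fun p => (phi p.1, p.2)) s) z.
  by clear e; elim: s os {iV} => [|p s IH] //= [] [] ? ? /IH.
apply: (@filterS _ _ (@nbhs_filter {ptws I -> Y} z) _ _ _ (box_ptws os')).
by move=> w /e /iV.
Qed.

Lemma open_coord (I : Type) (Y : topologicalType) (i : I) (O : set Y) :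
  open O -> open ([set z | O (z i)] : set {ptws I -> Y}).
Proof.
move=> oO; rewrite openE => z Oz.
apply: (@filterS _ _ (@nbhs_filter {ptws I -> Y} z) _ _ _ (@box_ptws _ _ z [:: (i, O)] _)).
  by move=> w [].
by split.
Qed.

Lemma open_prodP (X Z : topologicalType) (B : set X) (S : set Z) :
  open B -> open S -> open [set p : X * Z | B p.1 /\ S p.2].
Proof.
move=> oB oS; rewrite openE => p [Bp Sp].
exists (B, S); first by split; [exact: open_nbhs_nbhs | exact: open_nbhs_nbhs].
by move=> q [].
Qed.

Lemma open_bigI_nat (T : topologicalType) (k : nat) (Q : nat -> set T) :
  (forall l, (l < k)%N -> open (Q l)) -> open [set z | forall l, (l < k)%N -> Q l z].
Proof.
elim: k => [|k IH] h.
  rewrite (_ : [set z | _] = setT); first exact: openT.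
  by apply/seteqP; split => z //= _ l.
rewrite (_ : [set z | _] = [set z | forall l, (l < k)%N -> Q l z] `&` Q k).
  apply: openI; first by apply: IH => l lk; apply: h; apply: ltnW.
  exact: h.
apply/seteqP; split => z /=.
  by move=> H; split; [move=> l lk; apply: H; apply: ltnW | exact: H].
move=> [H1 H2] l; rewrite ltnS leq_eqVlt => /orP [/eqP -> //|]; exact: H1.
Qed.

Lemma open_impl (T : topologicalType) (P : Prop) (O : set T) :
  open O -> open [set z | P -> O z].
Proof.
move=> oO; case: (pselect P) => hP.
  by rewrite (_ : [set z | _] = O) //; apply/seteqP; split => z /=; auto.
rewrite (_ : [set z | _] = setT); first exact: openT.
by apply/seteqP; split => z //= _ /hP.
Qed.

Section Main.
Variables (X Y : topologicalType) (M : Type).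
Variables (PX : set (set X)) (PY : set (set Y)) (C : set (set {ptws nat -> Y})).
Hypotheses (piX : pi_base PX) (piY : pi_base PY) (cellC : cellular C).
Variable h : nat -> M.
Hypothesis hinj : injective h.
Variable cf : set X -> set {ptws nat -> Y}.
Hypothesis cfC : forall B, PX B -> C (cf B).
Hypothesis cfI : forall B B', PX B -> PX B' -> cf B = cf B' -> B = B'.
Variable cm : M -> set {ptws nat -> Y}.
Hypothesis cmC : forall m, C (cm m).
Hypothesis cmI : injective cm.
Variable cw : set Y -> set {ptws nat -> Y}.
Hypothesis cwC : forall W, PY W -> C (cw W).
Hypothesis cwI : forall W W', PY W -> PY W' -> cw W = cw W' -> W = W'.

Definition code (n j k : nat) : nat := Cantor.to_nat (n, Cantor.to_nat (j, k)).
Lemma code_inj n j k n' j' k' : code n j k = code n' j' k' -> [/\ n = n', j = j' & k = k'].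
Proof.
rewrite /code => /(congr1 Cantor.of_nat); rewrite !Cantor.cancel_of_to => e.
have e1 : n = n' := congr1 fst e.
have e2 : Cantor.to_nat (j, k) = Cantor.to_nat (j', k') := congr1 snd e.
have := congr1 Cantor.of_nat e2; rewrite !Cantor.cancel_of_to => e3.
have e4 : j = j' := congr1 fst e3. have e5 : k = k' := congr1 snd e3.
by split.
Qed.

Definition blk n j k := h (code n j k).
Definition inG n m := exists j k, m = blk n j k.

Lemma inG_uniq n n' m : inG n m -> inG n' m -> n = n'.
Proof.
by move=> [j [k ->]] [j' [k' /hinj /code_inj []]].
Qed.

Lemma avoid_list (d : M * set Y) (s : seq (M * set Y)) :
  exists a, forall n, (a <= n)%N -> forall l, (l < size s)%N -> ~ inG n (nth d s l).1.
Proof.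
elim: s => [|p s [a IH]]; first by exists 0%N.
have [b hb] : exists b, forall n, (b <= n)%N -> ~ inG n p.1.
  case: (pselect (exists n0, inG n0 p.1)) => [[n0 hn0]|hno].
    exists n0.+1 => n hn /(inG_uniq _ _ _ hn0) e; by rewrite e ltnn in hn.
  by exists 0%N => n _ hn; apply: hno; exists n.
exists (maxn a b) => n; rewrite geq_max => /andP [han hbn] [|l] /=.
  by move=> _; apply: hb.
by rewrite ltnS; apply: IH.
Qed.

Lemma cell_eq (U V : set {ptws nat -> Y}) z : C U -> C V -> U z -> V z -> U = V.
Proof.
move=> CU CV Uz Vz; apply: contrapT => nUV.
have := cellC.2 _ _ CU CV nUV.
by move/seteqP => [/(_ z (conj Uz Vz))].
Qed.

Definition d : M * set Y := (h 0, set0).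
Definition Tgt (B : set X) (s : seq (M * set Y)) (j : nat) : set {ptws nat -> Y} :=
  match j with
  | 0 => cf B
  | 1 => cm (h (size s))
  | j'.+2 => if odd j' then cw (nth d s j'./2).2 else cm (nth d s j'./2).1
  end.

Lemma Tgt_even B s l : Tgt B s (l.*2.+2) = cm (nth d s l).1.
Proof. by rewrite /= odd_double doubleK. Qed.
Lemma Tgt_odd B s l : Tgt B s (l.*2.+3) = cw (nth d s l).2.
Proof. by rewrite /Tgt /= odd_double /= uphalf_double. Qed.

Definition okent (s : seq (M * set Y)) := forall l, (l < size s)%N -> PY (nth d s l).2.

Lemma Tgt_C B s j : PX B -> okent s -> (j < (size s).*2.+2)%N -> C (Tgt B s j).
Proof.
move=> PB oks; case: j => [|[|j]] //=; first by move=> _; apply: cfC.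
rewrite !ltnS => hj; case: ifP => oj; last exact: cmC.

apply: cwC; apply: oks; by rewrite ltn_half_double.
Qed.

Definition E1 n (B : set X) (s : seq (M * set Y)) : set {ptws M -> Y} :=
  fun z => forall j, (j < (size s).*2.+2)%N -> Tgt B s j (fun k => z (blk n j k)).
Definition E2 (s : seq (M * set Y)) : set {ptws M -> Y} :=
  fun z => forall l, (l < size s)%N -> (nth d s l).2 (z (nth d s l).1).
Definition E n (B : set X) (s : seq (M * set Y)) : set (X * {ptws M -> Y}) :=
  fun p => B p.1 /\ (E1 n B s `&` E2 s) p.2.

Lemma E_open n B s : PX B -> okent s -> open (E n B s).
Proof.
move=> PB oks; apply: open_prodP; first exact: (piX.1 _ PB).1.
apply: openI.
  apply: open_bigI_nat => j hj.
  apply: (@open_restr M nat Y (blk n j) (Tgt B s j)).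
  by case: (cellC.1 _ (Tgt_C _ _ _ PB oks hj)).
apply: open_bigI_nat => l hl; apply: open_coord.
exact: (piY.1 _ (oks _ hl)).1.
Qed.

Definition Fam n : set (set (X * {ptws M -> Y})) :=
  fun A => exists B s, [/\ A = E n B s, PX B, okent s & A !=set0].

Lemma Fam_disj n : pairwise_disjoint (Fam n).
Proof.
move=> A A' [B [s [-> PB oks _]]] [B' [s' [-> PB' oks' _]]] neq.
apply/seteqP; split => // -[x z] [[Bx [e1 e2]] [Bx' [e1' e2']]].
apply: neq.
have hB : B = B'.
  apply: cfI => //.
  exact: (cell_eq _ _ _ (cfC _ PB) (cfC _ PB') (e1 0%N isT) (e1' 0%N isT)).
have hsz : size s = size s'.
  have := cell_eq _ _ _ (cmC _) (cmC _) (e1 1%N isT) (e1' 1%N isT).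
  by move=> /cmI /hinj.
have hs : s = s'.
  apply: (@eq_from_nth _ d) => // l hl.
  have hl' : (l < size s')%N by rewrite -hsz.
  have b2 k : (l < k)%N -> (l.*2.+2 < k.*2.+2)%N by move=> lk; rewrite !ltnS ltn_double.
  have b3 k : (l < k)%N -> (l.*2.+3 < k.*2.+2)%N by move=> lk; rewrite !ltnS -doubleS leq_double.
  have e3 := e1 _ (b2 _ hl); have e3' := e1' _ (b2 _ hl').
  rewrite Tgt_even in e3; rewrite Tgt_even in e3'.
  have e4 := e1 _ (b3 _ hl); have e4' := e1' _ (b3 _ hl').
  rewrite Tgt_odd in e4; rewrite Tgt_odd in e4'.
  have h1 := cmI _ _ (cell_eq _ _ _ (cmC _) (cmC _) e3 e3').
  have h2 := cwI _ _ (oks _ hl) (oks' _ hl') (cell_eq _ _ _ (cwC _ (oks _ hl)) (cwC _ (oks' _ hl')) e4 e4').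
  move: h1 h2; case: (nth d s l) => a b; case: (nth d s' l) => a' b' /= -> ->.
  done.
by rewrite hB hs.
Qed.

Lemma Fam_cover U : open U -> U !=set0 ->
  exists2 A, (\bigcup_n Fam n) A & A `<=` U.
Proof.
move=> oU [[x y] Uxy].
have : nbhs ((x, y) : X * {ptws M -> Y}) U by rewrite openE in oU; exact: oU.
move=> [[A1 B1] /= [nA nB] sub].
have [BB PBB BBA] := piX.2 (interior A1) (@open_interior _ A1) (ex_intro _ x nA).
have [s0 [os0 is0]] := ptws_box nB.
have os0' := okbox_nth (d:=d) os0.
pose Oi (i : M) : set Y := fun v => forall l, (l < size s0)%N -> (nth d s0 l).1 = i -> (nth d s0 l).2 v.
have oOi i : open (Oi i).
  apply: open_bigI_nat => l hl; apply: open_impl; exact: (os0' l hl).1.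
have yOi l : (l < size s0)%N -> Oi (nth d s0 l).1 (y (nth d s0 l).1).
  move=> hl l' hl' e; rewrite -e; exact: (os0' l' hl').2.
pose Wof (i : M) : set Y := match pselect (exists W, PY W /\ W `<=` Oi i) with
  | left hh => proj1_sig (cid hh) | right _ => set0 end.
have hW l : (l < size s0)%N -> PY (Wof (nth d s0 l).1) /\ Wof (nth d s0 l).1 `<=` Oi (nth d s0 l).1.
  move=> hl; rewrite /Wof; case: pselect => [hh|hn]; first exact: (proj2_sig (cid hh)).
  exfalso; apply: hn.
  have [W PW WO] := piY.2 _ (oOi (nth d s0 l).1) (ex_intro _ _ (yOi l hl)).
  by exists W.
pose s := map (fun p => (p.1, Wof p.1)) s0.
have ss : size s = size s0 by rewrite size_map.
have nths l : (l < size s0)%N -> nth d s l = ((nth d s0 l).1, Wof (nth d s0 l).1).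
  by move=> hl; rewrite (nth_map d).
have oks : okent s.
  by move=> l; rewrite ss => hl; rewrite nths //; exact: (hW l hl).1.
have [a ha] := avoid_list d s0.
exists (E a BB s); last first.
  move=> [x' z] [Bx' [e1 e2]]; apply: sub; split => /=.
    exact: interior_subset (BBA _ Bx').
  apply: is0; apply: (@nth_inbox _ _ d) => l hl.
  have := e2 l; rewrite ss nths //= => /(_ hl) /((hW l hl).2); apply => //.
exists a => //; exists BB, s; split => //.
have [xb BBxb] := (piX.1 _ PBB).2.
pose ptC (S : set {ptws nat -> Y}) : nat -> Y := match pselect (S !=set0) with
  | left hh => proj1_sig (cid hh) | right _ => fun _ => y (h 0) end.
have ptCP S : S !=set0 -> S (ptC S).
  by rewrite /ptC; case: pselect => // hh _; exact: (proj2_sig (cid hh)).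
pose ptY (W : set Y) : Y := match pselect (W !=set0) with
  | left hh => proj1_sig (cid hh) | right _ => y (h 0) end.
have ptYP W : W !=set0 -> W (ptY W).
  by rewrite /ptY; case: pselect => // hh _; exact: (proj2_sig (cid hh)).
pose y' (m : M) : Y :=
  match pselect (exists jk : nat * nat, m = blk a jk.1 jk.2) with
  | left hh => ptC (Tgt BB s (proj1_sig (cid hh)).1) (proj1_sig (cid hh)).2
  | right _ => match pselect (exists l, (l < size s0)%N /\ (nth d s0 l).1 = m) with
     | left _ => ptY (Wof m) | right _ => y m end
  end.
have y'blk j k : y' (blk a j k) = ptC (Tgt BB s j) k.
  rewrite /y'; case: pselect => [hh|hn]; last by exfalso; apply: hn; exists (j, k).
  case: (cid hh) => [[j' k']] /= /hinj /code_inj [_ <- <-] //.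
have y'ent l : (l < size s0)%N -> y' (nth d s0 l).1 = ptY (Wof (nth d s0 l).1).
  move=> hl; rewrite /y'; case: pselect => [hh|_].
    by exfalso; case: hh => -[j k] /= e; apply: (ha a (leqnn a) l hl); exists j, k.
  case: pselect => // hn; exfalso; apply: hn; by exists l.
exists (xb, y'); split => //; split => /=.
  move=> j hj.
  have -> : (fun k => y' (blk a j k)) = ptC (Tgt BB s j) by apply: funext => k; exact: y'blk.
  apply: ptCP; exact: (cellC.1 _ (Tgt_C _ _ _ PBB oks hj)).2.
move=> l; rewrite ss => hl; rewrite nths //= y'ent //; apply: ptYP.
exact: (piY.1 _ (hW l hl).1).2.
Qed.

Theorem main_sec : exists P : set (set (X * {ptws M -> Y})), sigma_disjoint_pi_base P.
Proof.
exists (\bigcup_n Fam n); split; first split.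
- move=> A [n _ [B [s [-> PB oks ne]]]]; split => //; exact: E_open.
- exact: Fam_cover.
- by exists Fam; split => // n; apply: Fam_disj.
Qed.

End Main.
Lemma card_le_fun T U (A : set T) (B : set U) (u0 : U) : A #<= B ->
  exists f : T -> U, (forall x, A x -> B (f x)) /\
    (forall x y, A x -> A y -> f x = f y -> x = y).
Proof.
move=> /card_leP [g].
pose el (x : T) (ax : A x) : A := SigSub (mem_set ax).
exists (fun x => match pselect (A x) with
                 | left ax => val (g (el x ax))
                 | right _ => u0 end).
split.
- move=> x ax; case: pselect => // ax'.
  by have := valP (g (el x ax')); rewrite inE.
- move=> x y ax ay; case: pselect => // ax'; case: pselect => // ay' /val_inj.
  move/(@inj _ _ _ g); rewrite !inE => /(_ I I) [].
  done.
Qed.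

Theorem lemma2 (X Y : topologicalType) (M : Type)
  (hX : hausdorff_space X) (hY : hausdorff_space Y)
  (* chat(Y^omega) > piw(Y) *)
  (hc : exists PY : set (set Y), min_pi_base PY /\ chat_gt {ptws nat -> Y} PY)
  (* piw(Y) >= piw(X) *)
  (hXY : piw_le X Y)
  (* omega <= mu *)
  (homega : [set: nat] #<= [set: M])
  (* mu <= piw(X) *)
  (hmu : card_le_piw [set: M] X) :
  exists P : set (set (X * {ptws M -> Y})), sigma_disjoint_pi_base P.
Proof.
case: hc => PY [[piY minY] hcY].
have [PX [piX PXle]] := hXY PY piY.
have [C [cellC CeqPY]] := hcY PY (fun _ h => h).
have [CleP PleC] := (card_eqPle C PY).1 CeqPY.
have Mle := hmu PX piX.
have XleC := card_le_trans PXle PleC.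
have MleC := card_le_trans Mle XleC.
have [m0 _] : exists m0 : M, True.
  case/card_leP: homega => g.
  by exists (val (g (SigSub (@mem_set _ [set: nat] 0%N I)))).
have [hh [_ hI]] := card_le_fun _ _ _ _ m0 homega.
have hinj : injective hh by move=> a b; apply: hI.
have [cf [cfC cfI]] := card_le_fun _ _ _ _ set0 XleC.
have [cm [cmC cmI]] := card_le_fun _ _ _ _ set0 MleC.
have cmI' : injective cm by move=> a b; apply: cmI.
have [cw [cwC cwI]] := card_le_fun _ _ _ _ set0 PleC.
exact: (@main_sec _ _ _ _ _ _ piX piY cellC _ hinj _ cfC cfI _ (fun m => cmC m I) cmI' _ cwC cwI).
Qed.
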